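(* If $U(x)$ is a polynomial with non-negative coefficients, then the function $V(x)=x(1+xU(x))$ is the covariance of some power series distribution.
   Context: For a power series $\omega(y)=\sum_k a_ky^k$ with non-negative coefficients and positive radius of convergence, the power series distribution (PSD) of $\omega$ with parameter $y>0$ is the law on $\{0,1,2,\dots\}$ given by $P\{\xi=k\}=a_ky^k/\omega(y)$. Its mean is $x(y)=y\omega'(y)/\omega(y)$ and its variance is $y\,x'(y)>0$, so $x(\cdot)$ has an inverse $y=f(x)$ on its range. The covariance of the PSD of $\omega$ is the function $V(x)=f(x)/f'(x)$, i.e. the variance expressed as a function of the mean $x$; a function is ''the covariance of a PSD'' if it equals this for some such $\omega$. *)

(* Defs.v *)
From Stdlib Require Import Reals.
From Coquelicot Require Import Coquelicot.
Open Scope R_scope.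

Definition psd_omega (a : nat -> R) (y : R) : R := Series (fun k => a k * y ^ k).

Definition psd_prob (a : nat -> R) (y : R) (k : nat) : R := a k * y ^ k / psd_omega a y.

Definition psd_mean (a : nat -> R) (y : R) : R :=
  Series (fun k => INR k * psd_prob a y k).

Definition psd_var (a : nat -> R) (y : R) : R :=
  Series (fun k => (INR k - psd_mean a y) ^ 2 * psd_prob a y k).

(* admissible power series: non-negative coefficients, positive radius of
   convergence, non-degenerate (at least two non-zero coefficients, so that the
   variance y x'(y) is > 0 and the mean map is invertible). *)
Definition psd_generator (a : nat -> R) : Prop :=
  (forall k, 0 <= a k) /\ Rbar_lt 0 (CV_radius a) /\
  (exists i j : nat, i <> j /\ 0 < a i /\ 0 < a j).

(* V is the covariance of the PSD of omega: the variance expressed as a function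
   of the mean, i.e. V(x(y)) = Var_y for every parameter y in (0, radius). *)
Definition is_psd_covariance (V : R -> R) : Prop :=
  exists a : nat -> R, psd_generator a /\
    forall y : R, 0 < y -> Rbar_lt y (CV_radius a) ->
      V (psd_mean a y) = psd_var a y.

Definition poly_eval (c : nat -> R) (n : nat) (x : R) : R :=
  sum_f_R0 (fun i => c i * x ^ i) n.

(* Main.v *)
Require Import Defs.
From Stdlib Require Import Reals.
From Coquelicot Require Import Coquelicot.
From Stdlib Require Import Lra Lia FunctionalExtensionality.
Open Scope R_scope.

Definition fixit (Phi : (nat -> R) -> (nat -> R)) (k : nat) : R :=
  Nat.iter (S k) Phi (fun _ => 0) k.

Definition local_dep (Phi : (nat -> R) -> (nat -> R)) : Prop :=
  forall f g k, (forall j, (j < k)%nat -> f j = g j) -> Phi f k = Phi g k.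

Lemma iter_stable Phi : local_dep Phi ->
  forall N j, (j < N)%nat -> Nat.iter N Phi (fun _ => 0) j = Nat.iter (S N) Phi (fun _ => 0) j.
Proof.
  intros H N. induction N as [|N IH]; intros j Hj; [lia|].
  change (Phi (Nat.iter N Phi (fun _ => 0)) j = Phi (Nat.iter (S N) Phi (fun _ => 0)) j).
  apply H. intros i Hi. apply IH. lia.
Qed.

Lemma iter_stable2 Phi : local_dep Phi ->
  forall d N j, (j < N)%nat -> Nat.iter N Phi (fun _ => 0) j = Nat.iter (d + N) Phi (fun _ => 0) j.
Proof.
  intros H d. induction d as [|d IH]; intros N j Hj; [reflexivity|].
  rewrite IH by exact Hj. change (S d + N)%nat with (S (d + N)).
  apply iter_stable; [exact H| lia].
Qed.

Lemma fixit_eq Phi : local_dep Phi -> forall k, fixit Phi k = Phi (fixit Phi) k.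
Proof.
  intros H k. unfold fixit at 1.
  change (Phi (Nat.iter k Phi (fun _ => 0)) k = Phi (fixit Phi) k).
  apply H. intros j Hj. unfold fixit.
  assert (E : k = ((k - S j) + S j)%nat) by lia. rewrite E.
  symmetry. apply iter_stable2; [exact H| lia].
Qed.

Lemma fixit_inv Phi (Q : nat -> R -> Prop) :
  (forall k, Q k 0) ->
  (forall f, (forall k, Q k (f k)) -> forall k, Q k (Phi f k)) ->
  forall k, Q k (fixit Phi k).
Proof.
  intros H0 HP k. unfold fixit.
  assert (G : forall N k, Q k (Nat.iter N Phi (fun _ => 0) k)).
  { intro N. induction N as [|N IH]; intro k'; simpl; [apply H0|].
    apply HP. exact IH. }
  apply G.
Qed.

Fixpoint Pw (f : nat -> R) (m : nat) : nat -> R :=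
  match m with
  | O => fun k => if Nat.eqb k 0 then 1 else 0
  | S m' => PS_mult f (Pw f m')
  end.

Lemma Pw_1 f k : Pw f 1 k = f k.
Proof.
  simpl. unfold PS_mult. destruct k as [|k].
  - simpl. ring.
  - rewrite tech5. rewrite Nat.sub_diag.
    rewrite sum_eq_R0. simpl. ring.
    intros j Hj. destruct (Nat.eqb_spec (S k - j) 0); [lia| ring].
Qed.

Lemma Pw_agree_le f g m l : (forall j, (j <= l)%nat -> f j = g j) -> Pw f m l = Pw g m l.
Proof.
  revert l. induction m as [|m IH]; intros l H; [reflexivity|].
  simpl. unfold PS_mult. apply sum_eq. intros j Hj.
  rewrite H by exact Hj. rewrite (IH (l - j)%nat). reflexivity.
  intros i Hi. apply H. lia.
Qed.

Lemma Pw_zero0 f m : f 0%nat = 0 -> Pw f (S m) 0 = 0.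
Proof. intro H. simpl. unfold PS_mult. simpl. rewrite H. ring. Qed.

Lemma Pw_agree_lt f g m k : f 0%nat = 0 -> g 0%nat = 0 ->
  (forall j, (j < k)%nat -> f j = g j) -> Pw f (S (S m)) k = Pw g (S (S m)) k.
Proof.
  intros Hf Hg H. change (PS_mult f (Pw f (S m)) k = PS_mult g (Pw g (S m)) k).
  unfold PS_mult. apply sum_eq. intros j Hj.
  destruct j as [|j]. { rewrite Hf, Hg. ring. }
  destruct (Nat.eq_dec (S j) k) as [E|E].
  - subst k. rewrite Nat.sub_diag. rewrite !Pw_zero0 by assumption. ring.
  - rewrite H by lia. rewrite (Pw_agree_le f g (S m) (k - S j)). reflexivity.
    intros i Hi. apply H. lia.
Qed.

Lemma sum_nonneg (f : nat -> R) N : (forall j, (j <= N)%nat -> 0 <= f j) -> 0 <= sum_f_R0 f N.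
Proof.
  induction N as [|N IH]; intro H; simpl. apply H; lia.
  apply Rplus_le_le_0_compat. apply IH; intros; apply H; lia. apply H; lia.
Qed.

Lemma Pw_mono f g : (forall j, 0 <= f j <= g j) -> forall m k, 0 <= Pw f m k <= Pw g m k.
Proof.
  intros H m. induction m as [|m IH]; intro k.
  - simpl. destruct (Nat.eqb k 0); lra.
  - simpl. unfold PS_mult. split.
    + apply sum_nonneg. intros j _. apply Rmult_le_pos. apply H. apply IH.
    + apply sum_Rle. intros j _. apply Rmult_le_compat; try apply H; apply IH.
Qed.

Definition g2 (j : nat) : R := if Nat.eqb j 0 then 0 else / (INR j ^ 2).

Lemma g2_nonneg j : 0 <= g2 j.
Proof.
  unfold g2. destruct (Nat.eqb_spec j 0). lra.
  apply Rlt_le, Rinv_0_lt_compat, pow_lt, lt_0_INR; lia.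
Qed.

Lemma sum_g2_le N : (1 <= N)%nat -> sum_f_R0 g2 N <= 2 - / INR N.
Proof.
  induction N as [|N IH]; intro H; [lia|].
  destruct N as [|N].
  - simpl. unfold g2. simpl. lra.
  - rewrite tech5. specialize (IH ltac:(lia)).
    unfold g2 at 2. destruct (Nat.eqb_spec (S (S N)) 0); [lia|].
    assert (Hp : 0 < INR (S N)) by (apply lt_0_INR; lia).
    rewrite (S_INR (S N)).
    assert (E : / INR (S N) - / (INR (S N) + 1) - / ((INR (S N) + 1) ^ 2)
               = / (INR (S N) * (INR (S N) + 1) ^ 2)) by (field; lra).
    assert (0 < / (INR (S N) * (INR (S N) + 1) ^ 2)).
    { apply Rinv_0_lt_compat. apply Rmult_lt_0_compat. lra. apply pow_lt. lra. }
    lra.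
Qed.

Lemma sum_g2_2 N : sum_f_R0 g2 N <= 2.
Proof.
  destruct N as [|N]. simpl. unfold g2. simpl. lra.
  pose proof (sum_g2_le (S N) ltac:(lia)).
  assert (0 < / INR (S N)) by (apply Rinv_0_lt_compat, lt_0_INR; lia). lra.
Qed.

Lemma sum_rev (g : nat -> R) k : sum_f_R0 (fun j => g (k - j)%nat) k = sum_f_R0 g k.
Proof.
  induction k as [|k IH]. reflexivity.
  rewrite decomp_sum by lia. simpl Init.Nat.pred.
  rewrite tech5. rewrite <- IH. replace (S k - 0)%nat with (S k) by lia.
  rewrite Rplus_comm. f_equal.
Qed.

Lemma sum_scal_l (C : R) (F : nat -> R) N : sum_f_R0 (fun i => C * F i) N = C * sum_f_R0 F N.
Proof. induction N as [|N IH]; simpl; [ring| rewrite IH; ring]. Qed.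

Definition wk (k j : nat) : R :=
  if (Nat.ltb 0 j && Nat.ltb j k)%bool then / (INR j ^ 2 * INR (k - j) ^ 2) else 0.

Lemma wk_nonneg k j : 0 <= wk k j.
Proof.
  unfold wk. destruct (Nat.ltb_spec 0 j); destruct (Nat.ltb_spec j k); cbv beta iota delta [andb]; try lra.
  apply Rlt_le, Rinv_0_lt_compat. apply Rmult_lt_0_compat; apply pow_lt, lt_0_INR; lia.
Qed.

Lemma wk_bound k j : (1 <= k)%nat -> (j <= k)%nat ->
  wk k j <= 2 / INR k ^ 2 * (g2 j + g2 (k - j)).
Proof.
  intros Hk Hj.
  assert (Hkp : 0 < INR k) by (apply lt_0_INR; lia).
  unfold wk. destruct (Nat.ltb_spec 0 j); destruct (Nat.ltb_spec j k); cbv beta iota delta [andb].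
  - unfold g2. destruct (Nat.eqb_spec j 0); [lia|]. destruct (Nat.eqb_spec (k - j) 0); [lia|].
    assert (Ek : INR k = INR j + INR (k - j)) by (rewrite <- plus_INR; f_equal; lia).
    rewrite Ek.
    set (u := INR j). set (v := INR (k - j)).
    assert (0 < u) by (apply lt_0_INR; lia). assert (0 < v) by (apply lt_0_INR; lia).
    assert (E : 2 / (u + v) ^ 2 * (/ u ^ 2 + / v ^ 2) - / (u ^ 2 * v ^ 2)
                = (u - v) ^ 2 / ((u + v) ^ 2 * u ^ 2 * v ^ 2)) by (field; lra).
    assert (0 <= (u - v) ^ 2 / ((u + v) ^ 2 * u ^ 2 * v ^ 2)).
    { apply Rmult_le_pos. apply pow2_ge_0. apply Rlt_le, Rinv_0_lt_compat.
      apply Rmult_lt_0_compat; [apply Rmult_lt_0_compat|]; apply pow_lt; lra. }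
    lra.
  all: apply Rmult_le_pos; [apply Rmult_le_pos; [lra| apply Rlt_le, Rinv_0_lt_compat, pow_lt; lra]|
      pose proof (g2_nonneg j); pose proof (g2_nonneg (k - j)); lra].
Qed.

Lemma sum_wk k : (1 <= k)%nat -> sum_f_R0 (wk k) k <= 8 / INR k ^ 2.
Proof.
  intro Hk.
  assert (Hkp : 0 < INR k) by (apply lt_0_INR; lia).
  eapply Rle_trans.
  { apply sum_Rle. intros j Hj. apply (wk_bound k j Hk Hj). }
  rewrite sum_scal_l. rewrite sum_plus. rewrite (sum_rev g2).
  pose proof (sum_g2_2 k).
  assert (0 <= 2 / INR k ^ 2) by (apply Rmult_le_pos; [lra| apply Rlt_le, Rinv_0_lt_compat, pow_lt; lra]).
  replace (8 / INR k ^ 2) with (2 / INR k ^ 2 * 4) by (field; lra).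
  apply Rmult_le_compat_l; lra.
Qed.

Definition hb (A : R) (j : nat) : R := if Nat.eqb j 0 then 0 else A ^ j / (A * INR j ^ 2).

Lemma hb_nonneg A j : 1 <= A -> 0 <= hb A j.
Proof.
  intro HA. unfold hb. destruct (Nat.eqb_spec j 0). lra.
  apply Rmult_le_pos. apply pow_le; lra.
  apply Rlt_le, Rinv_0_lt_compat, Rmult_lt_0_compat; [lra| apply pow_lt, lt_0_INR; lia].
Qed.

Lemma hb_g2 A j : 1 <= A -> hb A j = A ^ j / A * g2 j.
Proof.
  intro HA. unfold hb, g2. destruct (Nat.eqb_spec j 0). ring.
  assert (0 < INR j) by (apply lt_0_INR; lia). field. split; lra.
Qed.

Lemma Pw_hb_nonneg A m k : 1 <= A -> 0 <= Pw (hb A) m k.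
Proof. intro HA. apply (Pw_mono (hb A) (hb A)). intro j; pose proof (hb_nonneg A j HA); lra. Qed.

Lemma Pw_hb_bound A m k : 8 <= A -> (1 <= k)%nat ->
  Pw (hb A) (S m) k <= (8 / A) ^ m * (A ^ k / (A * INR k ^ 2)).
Proof.
  intros HA. revert k. induction m as [|m IH]; intros k Hk.
  - rewrite Pw_1. unfold hb. destruct (Nat.eqb_spec k 0); [lia|]. simpl. lra.
  - change (PS_mult (hb A) (Pw (hb A) (S m)) k <= (8 / A) ^ S m * (A ^ k / (A * INR k ^ 2))).
    unfold PS_mult.
    set (C := (8 / A) ^ m * A ^ k / (A * A)).
    assert (HC : 0 <= C).
    { assert (0 <= 8 / A) by (apply Rmult_le_pos; [lra| apply Rlt_le, Rinv_0_lt_compat; lra]).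
      unfold C. apply Rmult_le_pos. apply Rmult_le_pos; apply pow_le; lra.
      apply Rlt_le, Rinv_0_lt_compat; nra. }
    eapply Rle_trans with (sum_f_R0 (fun j => C * wk k j) k).
    + apply sum_Rle. intros j Hj.
      destruct j as [|j].
      { unfold hb at 1. simpl Nat.eqb. rewrite Rmult_0_l. apply Rmult_le_pos; [exact HC| apply wk_nonneg]. }
      destruct (Nat.eq_dec (S j) k) as [E|E].
      { subst k. rewrite Nat.sub_diag. rewrite Pw_zero0 by reflexivity. rewrite Rmult_0_r.
        apply Rmult_le_pos; [exact HC| apply wk_nonneg]. }
      assert (Hlt : (S j < k)%nat) by lia.
      pose proof (IH (k - S j)%nat ltac:(lia)) as Hb.
      pose proof (Pw_hb_nonneg A (S m) (k - S j) ltac:(lra)) as Hn.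
      unfold wk. destruct (Nat.ltb_spec 0 (S j)); [|lia]. destruct (Nat.ltb_spec (S j) k); [|lia].
      change ((true && true)%bool) with true. cbv iota.
      unfold hb. destruct (Nat.eqb_spec (S j) 0); [lia|].
      set (u := INR (S j)). set (v := INR (k - S j)).
      assert (0 < u) by (apply lt_0_INR; lia). assert (0 < v) by (apply lt_0_INR; lia).
      assert (Ek : A ^ k = A ^ S j * A ^ (k - S j)) by (rewrite <- pow_add; f_equal; lia).
      assert (0 < A ^ S j) by (apply pow_lt; lra).
      assert (0 < A ^ (k - S j)) by (apply pow_lt; lra).
      eapply Rle_trans.
      { apply Rmult_le_compat_l. apply Rmult_le_pos; [lra| apply Rlt_le, Rinv_0_lt_compat, Rmult_lt_0_compat; [lra| apply pow_lt; lra]].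
        exact Hb. }
      fold v. unfold C. rewrite Ek. apply Req_le.
      generalize ((8 / A) ^ m) (A ^ S j) (A ^ (k - S j)). intros P X Y. clearbody u v. field. repeat split; lra.
    + rewrite sum_scal_l.
      assert (0 < INR k) by (apply lt_0_INR; lia).
      eapply Rle_trans. apply Rmult_le_compat_l. exact HC. apply sum_wk. exact Hk.
      unfold C. apply Req_le. change ((8 / A) ^ S m) with (8 / A * (8 / A) ^ m).
      generalize ((8 / A) ^ m) (A ^ k). intros P X. field. split; lra.
Qed.

Definition Ucomb (c : nat -> R) (n : nat) (f : nat -> R) (k : nat) : R :=
  sum_f_R0 (fun i => c i * Pw f (S (S i)) k) n.

Definition trunc (k : nat) (f : nat -> R) (j : nat) : R := if Nat.ltb j k then f j else 0.

Definition Phib (c : nat -> R) (n : nat) (f : nat -> R) (k : nat) : R :=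
  match k with
  | O => 0
  | S O => 1
  | S (S k') => / INR (S k') * Ucomb c n (trunc (S (S k')) f) (S (S k'))
  end.

Lemma Phib_dep c n : local_dep (Phib c n).
Proof.
  intros f g k H. destruct k as [|[|k']]; try reflexivity.
  unfold Phib. f_equal. f_equal. extensionality j. unfold trunc.
  destruct (Nat.ltb_spec j (S (S k'))); [apply H; lia| reflexivity].
Qed.

Definition bseq c n := fixit (Phib c n).

Lemma bseq_0 c n : bseq c n 0 = 0.
Proof. unfold bseq. rewrite fixit_eq by apply Phib_dep. reflexivity. Qed.

Lemma bseq_1 c n : bseq c n 1 = 1.
Proof. unfold bseq. rewrite fixit_eq by apply Phib_dep. reflexivity. Qed.

Lemma bseq_rec c n k : bseq c n (S (S k)) = / INR (S k) * Ucomb c n (bseq c n) (S (S k)).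
Proof.
  unfold bseq at 1. rewrite fixit_eq by apply Phib_dep. fold (bseq c n).
  unfold Phib. f_equal. unfold Ucomb. apply sum_eq. intros i _. f_equal.
  apply Pw_agree_lt.
  - unfold trunc. simpl. apply bseq_0.
  - apply bseq_0.
  - intros j Hj. unfold trunc. destruct (Nat.ltb_spec j (S (S k))); [reflexivity| lia].
Qed.

Definition Aconst (c : nat -> R) (n : nat) : R := 8 * (1 + sum_f_R0 c n).

Lemma pow_le1 x m : 0 <= x <= 1 -> x ^ m <= 1.
Proof. intro H. rewrite <- (pow1 m). apply pow_incr. exact H. Qed.

Lemma bseq_bound c n : (forall i, (i <= n)%nat -> 0 <= c i) ->
  forall k, 0 <= bseq c n k <= hb (Aconst c n) k.
Proof.
  intros Hc.
  set (Sc := sum_f_R0 c n).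
  assert (HS : 0 <= Sc) by (apply sum_nonneg; exact Hc).
  set (A := Aconst c n).
  assert (HA : 8 <= A) by (unfold A, Aconst; fold Sc; lra).
  apply (fixit_inv (Phib c n) (fun k v => 0 <= v <= hb A k)).
  - intro k. pose proof (hb_nonneg A k ltac:(lra)). lra.
  - intros f Hf k. destruct k as [|[|k']].
    + simpl. unfold hb. simpl. lra.
    + simpl. unfold hb. simpl. split; [lra|]. right. field. lra.
    + unfold Phib. set (K := S (S k')).
      assert (Ht : forall j, 0 <= trunc K f j <= hb A j).
      { intro j. unfold trunc. destruct (Nat.ltb_spec j K). apply Hf.
        pose proof (hb_nonneg A j ltac:(lra)). lra. }
      assert (Hk1 : 1 <= INR (S k')) by (apply (le_INR 1); lia).
      assert (Hm : forall m, 0 <= Pw (trunc K f) (S m) K <= (8 / A) ^ m * hb A K).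
      { intro m. pose proof (Pw_mono _ _ Ht (S m) K) as [H1 H2].
        pose proof (Pw_hb_bound A m K HA ltac:(unfold K; lia)).
        assert (EK : hb A K = A ^ K / (A * INR K ^ 2)).
        { unfold hb. destruct (Nat.eqb_spec K 0); [unfold K in *; lia| reflexivity]. }
        rewrite EK. lra. }
      assert (H8 : 0 <= 8 / A <= 1).
      { split. apply Rmult_le_pos; [lra| apply Rlt_le, Rinv_0_lt_compat; lra].
        apply (Rmult_le_reg_r A); [lra|]. unfold Rdiv. rewrite Rmult_assoc, Rinv_l by lra. lra. }
      assert (HU : 0 <= Ucomb c n (trunc K f) K <= 8 / A * Sc * hb A K).
      { unfold Ucomb. split.
        - apply sum_nonneg. intros i Hi. apply Rmult_le_pos. apply Hc; exact Hi. apply (Hm (S i)).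
        - replace (8 / A * Sc * hb A K) with (sum_f_R0 (fun i => (8 / A * hb A K) * c i) n)
            by (rewrite sum_scal_l; unfold Sc; ring).
          apply sum_Rle. intros i Hi.
          pose proof (Hm (S i)) as [H1 H2]. pose proof (Hc i Hi).
          pose proof (hb_nonneg A K ltac:(lra)).
          assert ((8 / A) ^ S i <= 8 / A).
          { simpl. pose proof (pow_le1 (8 / A) i H8). nra. }
          assert (Pw (trunc K f) (S (S i)) K <= 8 / A * hb A K) by nra.
          nra. }
      assert (E8 : 8 / A * Sc = Sc / (1 + Sc)) by (unfold A, Aconst; fold Sc; field; lra).
      assert (Hr : Sc / (1 + Sc) <= 1).
      { apply (Rmult_le_reg_r (1 + Sc)); [lra|]. unfold Rdiv. rewrite Rmult_assoc, Rinv_l by lra. lra. }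
      pose proof (hb_nonneg A K ltac:(lra)).
      assert (0 < / INR (S k') <= 1).
      { split. apply Rinv_0_lt_compat; lra. rewrite <- Rinv_1. apply Rinv_le_contravar; lra. }
      split. apply Rmult_le_pos; lra.
      rewrite E8 in HU. assert (Ucomb c n (trunc K f) K <= hb A K) by nra. nra.
Qed.

Definition Phia (b : nat -> R) (g : nat -> R) (k : nat) : R :=
  match k with
  | O => 1
  | S k' => / INR (S k') * PS_mult b g (S k')
  end.

Lemma Phia_dep b : b 0%nat = 0 -> local_dep (Phia b).
Proof.
  intros Hb f g k H. destruct k as [|k]; [reflexivity|].
  unfold Phia. f_equal. unfold PS_mult. apply sum_eq. intros j Hj.
  destruct j as [|j]. rewrite Hb. ring. rewrite H by lia. reflexivity.
Qed.

Definition aseq c n := fixit (Phia (bseq c n)).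

Lemma aseq_eq c n k : aseq c n k = Phia (bseq c n) (aseq c n) k.
Proof. unfold aseq. apply fixit_eq. apply Phia_dep. apply bseq_0. Qed.

Lemma aseq_0 c n : aseq c n 0 = 1.
Proof. rewrite aseq_eq. reflexivity. Qed.

Lemma aseq_id c n k : INR k * aseq c n k = PS_mult (bseq c n) (aseq c n) k.
Proof.
  destruct k as [|k].
  - unfold PS_mult. simpl. rewrite bseq_0. ring.
  - rewrite aseq_eq. unfold Phia. field. apply not_0_INR. lia.
Qed.

Lemma aseq_1 c n : aseq c n 1 = 1.
Proof.
  pose proof (aseq_id c n 1) as H. unfold PS_mult in H. simpl in H.
  rewrite bseq_0, bseq_1, aseq_0 in H. simpl in H. lra.
Qed.

Lemma aseq_bound c n : (forall i, (i <= n)%nat -> 0 <= c i) ->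
  forall k, 0 <= aseq c n k <= Aconst c n ^ k.
Proof.
  intros Hc.
  set (A := Aconst c n).
  assert (HA : 8 <= A).
  { unfold A, Aconst. pose proof (sum_nonneg c n Hc). lra. }
  pose proof (bseq_bound c n Hc) as Hb. fold A in Hb.
  unfold aseq. apply (fixit_inv _ (fun k v => 0 <= v <= A ^ k)).
  - intro k. pose proof (pow_le A k ltac:(lra)). lra.
  - intros f Hf k. destruct k as [|k].
    + simpl. lra.
    + unfold Phia.
      assert (Hk : 1 <= INR (S k)) by (apply (le_INR 1); lia).
      assert (HP : 0 <= PS_mult (bseq c n) f (S k) <= A ^ S k / A * 2).
      { unfold PS_mult. split.
        - apply sum_nonneg. intros j _. apply Rmult_le_pos; [apply Hb| apply Hf].
        - eapply Rle_trans with (sum_f_R0 (fun j => A ^ S k / A * g2 j) (S k)).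
          + apply sum_Rle. intros j Hj.
            assert (E : A ^ S k / A * g2 j = hb A j * A ^ (S k - j)).
            { rewrite hb_g2 by lra. replace (S k) with (j + (S k - j))%nat at 1 by lia.
              rewrite pow_add. field. lra. }
            rewrite E. apply Rmult_le_compat; try apply Hb; apply Hf.
          + rewrite sum_scal_l. apply Rmult_le_compat_l.
            apply Rmult_le_pos; [apply pow_le; lra| apply Rlt_le, Rinv_0_lt_compat; lra].
            apply sum_g2_2. }
      assert (0 < A ^ S k) by (apply pow_lt; lra).
      split.
      * apply Rmult_le_pos; [apply Rlt_le, Rinv_0_lt_compat; lra| lra].
      * assert (E : A ^ S k = / INR (S k) * (A ^ S k * INR (S k))) by (field; lra).
        rewrite E. apply Rmult_le_compat_l. apply Rlt_le, Rinv_0_lt_compat; lra.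
        assert (A ^ S k / A * 2 <= A ^ S k * INR (S k)).
        { unfold Rdiv. rewrite Rmult_assoc.
          assert (/ A * 2 <= 1).
          { apply (Rmult_le_reg_r A); [lra|]. rewrite Rmult_comm, <- Rmult_assoc, Rinv_r by lra. lra. }
          nra. }
        lra.
Qed.

Lemma bseq_id c n k : INR k * bseq c n k = bseq c n k + Ucomb c n (bseq c n) k.
Proof.
  destruct k as [|[|k]].
  - rewrite bseq_0. unfold Ucomb. rewrite sum_eq_R0. simpl; ring.
    intros i _. rewrite Pw_zero0 by apply bseq_0. ring.
  - rewrite bseq_1. unfold Ucomb. rewrite sum_eq_R0. simpl; ring.
    intros i _.
    change (Pw (bseq c n) (S (S i)) 1) with (PS_mult (bseq c n) (Pw (bseq c n) (S i)) 1).
    unfold PS_mult. cbn [sum_f_R0 Nat.sub]. rewrite bseq_0, Pw_zero0 by apply bseq_0. ring.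
  - pose proof (bseq_rec c n k) as H.
    assert (Hk : 0 < INR (S k)) by (apply lt_0_INR; lia).
    rewrite (S_INR (S k)).
    assert (E : Ucomb c n (bseq c n) (S (S k)) = INR (S k) * bseq c n (S (S k))).
    { rewrite H. field. lra. }
    rewrite E. ring.
Qed.

Lemma bseq_le_ka c n : (forall i, (i <= n)%nat -> 0 <= c i) ->
  forall k, bseq c n k <= INR k * aseq c n k.
Proof.
  intros Hc k. rewrite aseq_id. destruct k as [|k].
  - rewrite bseq_0. unfold PS_mult. simpl. rewrite bseq_0. lra.
  - unfold PS_mult. rewrite tech5. rewrite Nat.sub_diag, aseq_0.
    assert (0 <= sum_f_R0 (fun j => bseq c n j * aseq c n (S k - j)) k).
    { apply sum_nonneg. intros j _. apply Rmult_le_pos. apply (bseq_bound c n Hc). apply (aseq_bound c n Hc). }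
    lra.
Qed.

Lemma is_series_plusR (u v : nat -> R) (lu lv : R) :
  is_series u lu -> is_series v lv -> is_series (fun k => u k + v k) (lu + lv).
Proof. intros Hu Hv. exact (is_series_plus u v lu lv Hu Hv). Qed.

Lemma is_series_scalR (C : R) (u : nat -> R) (l : R) :
  is_series u l -> is_series (fun k => C * u k) (C * l).
Proof. intros Hu. exact (is_series_scal C u l Hu). Qed.

Lemma mult_series (p q : nat -> R) y (P Q : R) : 0 <= y ->
  (forall k, 0 <= p k) -> (forall k, 0 <= q k) ->
  is_series (fun k => p k * y ^ k) P -> is_series (fun k => q k * y ^ k) Q ->
  is_series (fun k => PS_mult p q k * y ^ k) (P * Q).
Proof.
  intros Hy Hp Hq HP HQ.
  assert (Hrp : ex_series (fun k => Rabs (p k * y ^ k))).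
  { exists P. eapply is_series_ext; [|exact HP]. intro k. symmetry. apply Rabs_pos_eq.
    apply Rmult_le_pos; [apply Hp| apply pow_le; exact Hy]. }
  assert (Hrq : ex_series (fun k => Rabs (q k * y ^ k))).
  { exists Q. eapply is_series_ext; [|exact HQ]. intro k. symmetry. apply Rabs_pos_eq.
    apply Rmult_le_pos; [apply Hq| apply pow_le; exact Hy]. }
  pose proof (is_series_mult _ _ _ _ HP HQ Hrp Hrq) as H.
  eapply is_series_ext; [|exact H]. intro k. simpl.
  unfold PS_mult. rewrite Rmult_comm, scal_sum. apply sum_eq. intros j Hj.
  replace (y ^ k) with (y ^ j * y ^ (k - j)) by (rewrite <- pow_add; f_equal; lia). ring.
Qed.

Lemma Pw_series (b : nat -> R) y (Bv : R) : 0 <= y -> (forall k, 0 <= b k) ->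
  is_series (fun k => b k * y ^ k) Bv ->
  forall m, is_series (fun k => Pw b (S m) k * y ^ k) (Bv ^ S m).
Proof.
  intros Hy Hb HB m. induction m as [|m IH].
  - replace (Bv ^ 1) with Bv by ring.
    eapply is_series_ext; [|exact HB]. intro k. rewrite Pw_1. reflexivity.
  - change (is_series (fun k => PS_mult b (Pw b (S m)) k * y ^ k) (Bv * Bv ^ S m)).
    apply mult_series; try assumption.
    intro k. apply (Pw_mono b b). intro j. pose proof (Hb j); lra.
Qed.

Lemma is_series_sum (F : nat -> nat -> R) (L : nat -> R) N :
  (forall i, (i <= N)%nat -> is_series (F i) (L i)) ->
  is_series (fun k => sum_f_R0 (fun i => F i k) N) (sum_f_R0 L N).
Proof.
  induction N as [|N IH]; intro H.
  - simpl. apply H. lia.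
  - simpl. apply is_series_plusR. apply IH. intros; apply H; lia. apply H; lia.
Qed.

Lemma coef2 (a b : nat -> R) : (forall k, INR k * a k = PS_mult b a k) ->
  forall k, INR k ^ 2 * a k = PS_mult (fun j => INR j * b j) a k + PS_mult b (PS_mult b a) k.
Proof.
  intros H k.
  replace (INR k ^ 2 * a k) with (INR k * (INR k * a k)) by ring.
  rewrite H. unfold PS_mult at 1 2 3.
  rewrite <- sum_plus. rewrite <- sum_scal_l. apply sum_eq. intros j Hj.
  rewrite <- H. rewrite minus_INR by exact Hj. ring.
Qed.

Theorem corollary2 (c : nat -> R) (n : nat) :
  (forall i : nat, (i <= n)%nat -> 0 <= c i) ->
  is_psd_covariance (fun x => x * (1 + x * poly_eval c n x)).
Proof.
  intro Hc.
  set (a := aseq c n). set (b := bseq c n). set (A := Aconst c n).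
  assert (HA : 8 <= A).
  { unfold A, Aconst. pose proof (sum_nonneg c n Hc). lra. }
  assert (Ha : forall k, 0 <= a k <= A ^ k) by apply (aseq_bound c n Hc).
  assert (Hb : forall k, 0 <= b k) by (intro k; apply (bseq_bound c n Hc)).
  exists a. split.
  - split; [intro k; apply Ha|]. split.
    + pose proof (CV_radius_bounded a) as [Hub _].
      assert (H1 : Rbar_le (/ A) (CV_radius a)).
      { apply Hub. exists 1. intro k. rewrite Rabs_pos_eq.
        - pose proof (Ha k) as [H0 H1]. rewrite <- Rinv_pow by lra.
          assert (0 < A ^ k) by (apply pow_lt; lra).
          apply (Rmult_le_reg_r (A ^ k)); [lra|]. rewrite Rmult_assoc, Rinv_l by lra. lra.
        - apply Rmult_le_pos; [apply Ha| apply pow_le; apply Rlt_le, Rinv_0_lt_compat; lra]. }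
      assert (0 < / A) by (apply Rinv_0_lt_compat; lra).
      destruct (CV_radius a) as [r| |]; simpl in *; lra.
    + exists 0%nat, 1%nat. split; [lia|]. unfold a. rewrite aseq_0, aseq_1. split; lra.
  - intros y Hy Hr.
    assert (Hry : Rbar_lt (Rabs y) (CV_radius a)) by (rewrite Rabs_pos_eq; [exact Hr| lra]).
    assert (Hax : ex_series (fun k => a k * y ^ k)).
    { pose proof (CV_disk_inside a y Hry) as H. eapply ex_series_ext; [|exact H].
      intro k. apply Rabs_pos_eq. apply Rmult_le_pos; [apply Ha| apply pow_le; lra]. }
    assert (Hdx : ex_series (fun k => INR k * a k * y ^ k)).
    { assert (Hr' : Rbar_lt (Rabs y) (CV_radius (PS_derive a))) by (rewrite CV_radius_derive; exact Hry).
      pose proof (CV_disk_inside _ y Hr') as H.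
      apply (ex_series_scal y) in H.
      apply ex_series_incr_1. eapply ex_series_ext; [|exact H].
      intro k. unfold PS_derive. rewrite Rabs_pos_eq.
      - unfold scal; simpl; unfold mult; simpl. ring.
      - apply Rmult_le_pos; [apply Rmult_le_pos; [apply pos_INR| apply Ha]| apply pow_le; lra]. }
    assert (Hbx : ex_series (fun k => b k * y ^ k)).
    { apply (@ex_series_le R_AbsRing R_CompleteNormedModule _ (fun k => INR k * a k * y ^ k)); [|exact Hdx]. intro k.
      change (norm (b k * y ^ k)) with (Rabs (b k * y ^ k)).
      rewrite Rabs_pos_eq by (apply Rmult_le_pos; [apply Hb| apply pow_le; lra]).
      apply Rmult_le_compat_r; [apply pow_le; lra|]. apply (bseq_le_ka c n Hc). }
    set (W := Series (fun k => a k * y ^ k)).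
    set (Bv := Series (fun k => b k * y ^ k)).
    assert (HW : is_series (fun k => a k * y ^ k) W) by (apply Series_correct; exact Hax).
    assert (HB : is_series (fun k => b k * y ^ k) Bv) by (apply Series_correct; exact Hbx).
    assert (HW1 : 1 <= W).
    { assert (Z : Series (fun _ : nat => 0) = 0).
      { apply is_series_unique. pose proof (is_series_scalR 0 _ _ HW) as H.
        rewrite Rmult_0_l in H. eapply is_series_ext; [|exact H]. intro; simpl; ring. }
      unfold W. rewrite Series_incr_1 by exact Hax.
      unfold a at 1. rewrite aseq_0.
      assert (0 <= Series (fun k => a (S k) * y ^ (S k))).
      { rewrite <- Z. apply Series_le.
        - intro k. split; [lra|]. apply Rmult_le_pos; [apply Ha| apply pow_le; lra].
        - apply ex_series_incr_1 in Hax. exact Hax. }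
      simpl pow at 1. lra. }
    assert (Hka : forall k, INR k * a k = PS_mult b a k) by (intro k; apply aseq_id).
    assert (Hmean : is_series (fun k => INR k * a k * y ^ k) (Bv * W)).
    { pose proof (mult_series b a y Bv W ltac:(lra) Hb (fun k => proj1 (Ha k)) HB HW) as H.
      eapply is_series_ext; [|exact H]. intro k. rewrite Hka. reflexivity. }
    assert (Hpw := Pw_series b y Bv ltac:(lra) Hb HB).
    set (SU := sum_f_R0 (fun i => c i * Bv ^ S (S i)) n).
    assert (HU : is_series (fun k => Ucomb c n b k * y ^ k) SU).
    { pose proof (is_series_sum (fun i k => c i * (Pw b (S (S i)) k * y ^ k))
                   (fun i => c i * Bv ^ S (S i)) n) as H.
      assert (H' : is_series (fun k => sum_f_R0 (fun i => c i * (Pw b (S (S i)) k * y ^ k)) n) SU).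
      { apply H. intros i _. apply is_series_scalR. apply Hpw. }
      eapply is_series_ext; [|exact H']. intro k. unfold Ucomb.
      rewrite Rmult_comm, scal_sum. apply sum_eq. intros; ring. }
    set (JB := Bv + SU).
    assert (HJ : is_series (fun k => (INR k * b k) * y ^ k) JB).
    { pose proof (is_series_plusR _ _ _ _ HB HU) as H.
      eapply is_series_ext; [|exact H]. intro k. simpl.
      unfold b. rewrite bseq_id. ring. }
    assert (HS2 : is_series (fun k => INR k ^ 2 * a k * y ^ k) (JB * W + Bv * (Bv * W))).
    { assert (Hjb : forall k, 0 <= INR k * b k) by (intro k; apply Rmult_le_pos; [apply pos_INR| apply Hb]).
      pose proof (mult_series (fun j => INR j * b j) a y JB W ltac:(lra) Hjb (fun k => proj1 (Ha k)) HJ HW) as H1.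
      assert (Hba : forall k, 0 <= PS_mult b a k).
      { intro k. rewrite <- (Hka k). apply Rmult_le_pos; [apply pos_INR| apply Ha]. }
      assert (Hmean' : is_series (fun k => PS_mult b a k * y ^ k) (Bv * W)).
      { eapply is_series_ext; [|exact Hmean]. intro k. cbv beta. rewrite Hka. reflexivity. }
      pose proof (mult_series b (PS_mult b a) y Bv (Bv * W) ltac:(lra) Hb Hba HB Hmean') as H2.
      pose proof (is_series_plusR _ _ _ _ H1 H2) as H.
      eapply is_series_ext; [|exact H]. intro k. cbv beta.
      rewrite (coef2 a b Hka k). symmetry. apply Rmult_plus_distr_r. }
    assert (HWpos : W <> 0) by lra.
    assert (Emean : psd_mean a y = Bv).
    { unfold psd_mean, psd_prob, psd_omega. fold W.
      apply is_series_unique.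
      pose proof (is_series_scalR (/ W) _ _ Hmean) as H.
      replace Bv with (/ W * (Bv * W)) by (field; exact HWpos).
      eapply is_series_ext; [|exact H]. intro k. simpl. field. exact HWpos. }
    assert (Evar : psd_var a y = JB).
    { unfold psd_var. rewrite Emean. unfold psd_prob, psd_omega. fold W.
      apply is_series_unique.
      pose proof (is_series_scalR (/ W) _ _ HS2) as H1.
      pose proof (is_series_scalR (- 2 * Bv / W) _ _ Hmean) as H2.
      pose proof (is_series_scalR (Bv ^ 2 / W) _ _ HW) as H3.
      pose proof (is_series_plusR _ _ _ _ (is_series_plusR _ _ _ _ H1 H2) H3) as H.
      replace JB with (/ W * (JB * W + Bv * (Bv * W)) + - 2 * Bv / W * (Bv * W) + Bv ^ 2 / W * W)
        by (field; exact HWpos).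
      eapply is_series_ext; [|exact H]. intro k. simpl. field. exact HWpos. }
    rewrite Emean, Evar. unfold JB, SU, poly_eval.
    rewrite <- !sum_scal_l. rewrite Rmult_plus_distr_l, Rmult_1_r. f_equal.
    rewrite <- sum_scal_l. apply sum_eq. intros i _. simpl. ring.
Qed.
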